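(* Let $G$ be a graph with $n$ vertices (identified with its graph of positive edges), let $r\ge 1$, and let $P=\{v_1,\ldots,v_r\}$ be the first $r$ pivots chosen by running $\textsf{QwickCluster}$ on $G$ (all of its pivots, if it chooses fewer than $r$). Then the expected number of edges of $G$ not incident with any element of $P\cup\Gamma(P)$ is less than $\frac{n^2}{2(r+1)}$.
   Context: A complete ``$+$/$-$''-labeled graph on $V$ is identified with the graph $(V,E^+)$ of its positive edges. $\Gamma(v)$ is the set of (positive) neighbours of $v$ in $G$ and $\Gamma(S)=\bigcup_{v\in S}\Gamma(v)$. Algorithm $\textsf{QwickCluster}$: set $R\gets V$. While $R\neq\emptyset$: pick a pivot $v$ uniformly at random from $R$; output the cluster $C=\{v\}\cup(\Gamma(v)\cap R)$; set $R\gets R\setminus C$. *)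

(* Defs.v *)
From mathcomp Require Import all_boot all_order all_algebra.
Set Implicit Arguments. Unset Strict Implicit. Unset Printing Implicit Defensive.
Import Order.TTheory GRing.Theory Num.Theory.
Local Open Scope ring_scope.

Section QC.
Variable T : finType.
(* the graph of positive edges: a symmetric irreflexive relation *)
Variable e : rel T.

Definition nbhd (v : T) : {set T} := [set w | e v w].
Definition nbhdS (S : {set T}) : {set T} := \bigcup_(v in S) nbhd v.

Definition edges : {set {set T}} :=
  [set A : {set T} | [exists x, exists y, (x != y) && e x y && (A == [set x; y])]].

Definition n_edges_avoiding (S : {set T}) : nat :=
  #|[set A in edges | [disjoint A & S]]|.

(* Expected value of n_edges_avoiding (P :|: nbhdS P) where P is the set of
   pivots collected so far together with the next k pivots chosen by
   QwickCluster started from remaining set Rm (all pivots, if it stops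
   earlier). *)
Fixpoint qc_exp (R : numFieldType) (k : nat) (Rm P : {set T}) : R :=
  match k with
  | 0%N => (n_edges_avoiding (P :|: nbhdS P))%:R
  | k'.+1 =>
    if Rm == set0 then (n_edges_avoiding (P :|: nbhdS P))%:R
    else (#|Rm|%:R)^-1 *
         \sum_(v in Rm) qc_exp R k' (Rm :\: (v |: (nbhd v :&: Rm))) (v |: P)
  end.

End QC.

(* Main.v *)
Require Import Defs.
From mathcomp Require Import all_boot all_order all_algebra.
From mathcomp Require Import ring lra.
Set Implicit Arguments. Unset Strict Implicit. Unset Printing Implicit Defensive.
Import Order.TTheory GRing.Theory Num.Theory.
Local Open Scope ring_scope.

Definition G (R : realFieldType) (N k y : R) := y * N / (2 * (N + k * y)).
Definition G' (R : realFieldType) (N k x : R) := N ^+ 2 / (2 * (N + k * x) ^+ 2).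

Lemma tangentG (R : realFieldType) (N k x y : R) : 0 < N -> 0 <= k -> 0 <= x -> 0 <= y ->
  G N k y <= G N k x + G' N k x * (y - x).
Proof.
move=> N0 k0 x0 y0.
have h1 : N + k * x != 0 by rewrite gt_eqF //; nra.
have h2 : N + k * y != 0 by rewrite gt_eqF //; nra.
rewrite -subr_ge0.
have -> : G N k x + G' N k x * (y - x) - G N k y =
   N ^+ 2 * k * (x - y) ^+ 2 / (2 * (N + k * x) ^+ 2 * (N + k * y)).
  rewrite /G /G'. field. rewrite h1 h2 /=. done.
apply: divr_ge0; first by apply: mulr_ge0; [apply: mulr_ge0=> //; exact: sqr_ge0 | exact: sqr_ge0].
apply: mulr_ge0; last by nra.
apply: mulr_ge0 => //; nra.
Qed.

Lemma G'_ge0 (R : realFieldType) (N k x : R) : 0 <= G' N k x.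
Proof. rewrite /G'; apply: divr_ge0; first exact: sqr_ge0. by apply: mulr_ge0 => //; exact: sqr_ge0. Qed.

Lemma stepG (R : realFieldType) (N k b M : R) : 0 < N -> 0 <= k -> 0 <= b -> 0 <= M ->
  b * (N + M) <= M * N -> G N k b <= G N (k + 1) M.
Proof.
move=> N0 k0 b0 M0 H.
rewrite /G ler_pdivrMr; last by nra.
rewrite mulrAC ler_pdivlMr; last by nra.
nra.
Qed.

Lemma finalG (R : realFieldType) (N k M : R) : 0 < N -> 0 <= k -> 0 <= M -> M < N ->
  G N k M < N / (2 * (k + 1)).
Proof.
move=> N0 k0 M0 H.
rewrite /G ltr_pdivrMr; last by nra.
rewrite mulrAC ltr_pdivlMr; last by nra.
nra.
Qed.
Lemma CS (R : realFieldType) (T : finType) (a d : T -> R) : (forall x, 0 <= a x) ->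
  (\sum_x a x * d x) ^+ 2 <= (\sum_x a x) * (\sum_x a x * d x ^+ 2).
Proof.
move=> a0.
have H : 0 <= \sum_x \sum_y a x * a y * (d x - d y) ^+ 2.
  apply: sumr_ge0 => x _; apply: sumr_ge0 => y _.
  by rewrite mulr_ge0 ?sqr_ge0 // mulr_ge0.
have E : \sum_x \sum_y a x * a y * (d x - d y) ^+ 2 =
   2 * ((\sum_x a x) * (\sum_x a x * d x ^+ 2) - (\sum_x a x * d x) ^+ 2).
  have E1 : forall x y, a x * a y * (d x - d y) ^+ 2 =
     a y * (a x * d x ^+ 2) + a x * (a y * d y ^+ 2) - 2 * ((a x * d x) * (a y * d y)).
    move=> x y; ring.
  under eq_bigr => x _ do under eq_bigr => y _ do rewrite E1.
  under eq_bigr => x _ do rewrite sumrB big_split /= -mulr_suml -!mulr_sumr.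
  rewrite sumrB big_split /= -mulr_sumr -mulr_suml -mulr_sumr -mulr_suml expr2.
  ring.
rewrite E in H. rewrite -subr_ge0. nra.
Qed.
Lemma avg_bound (R : realFieldType) (S s M D N : R) : 0 < s -> 0 < N -> s ^+ 2 <= N ->
  S <= s * M - D -> M ^+ 2 <= s * D -> s^-1 * S <= M - M ^+ 2 / N.
Proof.
move=> s0 N0 sN HS HC.
have D0 : 0 <= D by have := sqr_ge0 M; nra.
have H1 : s * M ^+ 2 <= N * D by nra.
rewrite ler_pdivrMl //.
have -> : s * (M - M ^+ 2 / N) = s * M - (s * M ^+ 2) / N by field; rewrite gt_eqF.
apply: (le_trans HS); rewrite lerD2l lerN2 ler_pdivrMr //; nra.
Qed.

Lemma b_ge0 (R : realFieldType) (M N : R) : 0 < N -> 0 <= M -> M <= N -> 0 <= M - M ^+ 2 / N.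
Proof.
move=> N0 M0 MN; rewrite subr_ge0 ler_pdivrMr //; nra.
Qed.

Lemma b_step (R : realFieldType) (M N : R) : 0 < N -> 0 <= M -> M <= N ->
  (M - M ^+ 2 / N) * (N + M) <= M * N.
Proof.
move=> N0 M0 MN.
have -> : (M - M ^+ 2 / N) * (N + M) = (M * N ^+ 2 - M ^+ 3) / N by field; rewrite gt_eqF.
rewrite ler_pdivrMr //. have := sqr_ge0 M. nra.
Qed.
Lemma nbhdSU1 (T : finType) (e : rel T) v P : nbhdS e (v |: P) = nbhd e v :|: nbhdS e P.
Proof.
apply/setP => x; rewrite inE /nbhdS.
apply/bigcupP/orP.
- case=> w /setU1P[->|wP] xw; first by left.
  by right; apply/bigcupP; exists w.
- case=> [xv|/bigcupP[w wP xw]]; first by exists v; rewrite ?setU11.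
  by exists w; rewrite // setU1r.
Qed.

Lemma inv_step (T : finType) (e : rel T) Rm P v : Rm = ~: (P :|: nbhdS e P) ->
  Rm :\: (v |: (nbhd e v :&: Rm)) = ~: ((v |: P) :|: nbhdS e (v |: P)).
Proof.
move=> ->; rewrite nbhdSU1; apply/setP => x; rewrite !inE.
by case: (x == v); case: (x \in P); case: (e v x); case: (x \in nbhdS e P).
Qed.

Lemma qc_inv_init (T : finType) (e : rel T) : [set: T] = ~: (set0 :|: nbhdS e set0).
Proof. by rewrite /nbhdS big_set0 setU0 setC0. Qed.
Local Close Scope ring_scope.
Section Comb.
Variable T : finType.
Variable e : rel T.
Hypothesis e_sym : symmetric e.
Hypothesis e_irr : irreflexive e.

Definition deg (S : {set T}) (x : T) : nat := \sum_(y : T) ((y \in S) && e x y).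
Definition MM (S : {set T}) : nat := \sum_(x : T) (x \in S) * deg S x.

Lemma deg_sub (S S' : {set T}) x : S' \subset S -> deg S' x <= deg S x.
Proof.
move=> sub; apply: leq_sum => y _.
case: (boolP (y \in S')) => //= yS'; by rewrite (subsetP sub _ yS').
Qed.

Definition Rv (Rm : {set T}) v := Rm :\: (v |: (nbhd e v :&: Rm)).

Lemma MM_step (Rm : {set T}) v :
  MM (Rv Rm v) + \sum_(x : T) (x \in Rm) * e v x * deg Rm x <= MM Rm.
Proof.
rewrite /MM -big_split /=; apply: leq_sum => x _.
have sub : Rv Rm v \subset Rm by rewrite /Rv subsetDl.
have := deg_sub x sub.
case: (boolP (x \in Rv Rm v)) => xv.
- have := xv; rewrite /Rv !inE negb_or /nbhd.
  case/andP => /andP[_ H] xR; rewrite xR andbT in H; rewrite xR (negbTE H).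
  by rewrite /= !mul1n mul0n addn0.
- by rewrite mul0n add0n; case: (x \in Rm); case: (e v x).
Qed.

Lemma sum_deg2 (Rm : {set T}) :
  \sum_(v in Rm) \sum_(x : T) (x \in Rm) * e v x * deg Rm x =
  \sum_(x : T) (x \in Rm) * deg Rm x * deg Rm x.
Proof.
rewrite exchange_big /=; apply: eq_bigr => x _.
rewrite -big_distrl /=. congr (_ * _).
rewrite [in RHS]/deg -big_distrr /=. rewrite big_mkcond /=. congr (_ * _); apply: eq_bigr => v _.
by case: (v \in Rm); rewrite //= e_sym.
Qed.

Lemma edges_le (Rm : {set T}) : 2 * n_edges_avoiding e (~: Rm) <= MM Rm.
Proof.
pose Q (p : T * T) := [&& p.1 \in Rm, p.2 \in Rm & e p.1 p.2].
pose f (p : T * T) := [set p.1; p.2].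
have -> : MM Rm = \sum_(p | Q p) 1.
  rewrite /MM /deg. under eq_bigr => x _ do rewrite big_distrr /=.
  rewrite pair_bigA [RHS]big_mkcond /=; apply: eq_bigr => p _.
  by rewrite /Q; case: (p.1 \in Rm); case: (p.2 \in Rm); case: (e p.1 p.2).
rewrite (partition_big f xpredT) //=.
rewrite /n_edges_avoiding -sum1_card big_mkcond /= big_distrr /=.
apply: leq_sum => A _.
case: ifP => //; rewrite muln1 inE => /andP[Ae dis].
move: Ae; rewrite inE => /existsP[x /existsP[y /andP[/andP[xy exy] /eqP AE]]].
have xR : x \in Rm.
  apply: negbNE; apply/negP => xn.
  have xA : x \in A by rewrite AE !inE eqxx.
  by have := disjointFr dis xA; rewrite inE xn.
have yR : y \in Rm.
  apply: negbNE; apply/negP => yn.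
  have yA : y \in A by rewrite AE !inE eqxx orbT.
  by have := disjointFr dis yA; rewrite inE yn.
rewrite sum1dep_card.
have <- : #|[set (x, y); (y, x)]| = 2.
  rewrite cards2; suff -> : ((x, y) != (y, x)) by [].
  apply/negP => /eqP [E]; by rewrite E eqxx in xy.
apply: subset_leq_card; apply/subsetP => p; rewrite !inE => /orP[] /eqP -> /=;
  rewrite /Q /f /= xR yR AE ?eqxx ?exy //= e_sym exy /=.
by rewrite setUC eqxx.
Qed.
Lemma sumT1 : \sum_(y : T) 1 = #|T|.
Proof. by rewrite sum1_card. Qed.

Lemma deg_lt S x : deg S x + 1 <= #|T|.
Proof.
have -> : 1 = \sum_(y : T) (y == x).
  by rewrite (bigD1 x) //= eqxx big1 // => y /negbTE ->.
rewrite /deg -big_split -sumT1; apply: leq_sum => y _.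
case: eqP => [->|]; first by rewrite e_irr andbF.
by case: (_ && _).
Qed.

Lemma MM_lt S : MM S + #|T| <= #|T| ^ 2.
Proof.
rewrite -{1}sumT1 /MM -big_split expnS expn1 -sumT1 big_distrl /=.
apply: leq_sum => x _; rewrite mul1n.
have := deg_lt S x; rewrite sumT1; case: (x \in S); rewrite ?mul1n ?mul0n //=.
by move=> h; apply: leq_trans h; rewrite leq_add2r.
Qed.
End Comb.
Local Open Scope ring_scope.

Lemma base_le (R : realFieldType) (N k : R) (E M : nat) : 0 < N -> (2 * E <= M)%N ->
  (k = 0 \/ M = 0%N) -> (E%:R : R) <= G N k M%:R.
Proof.
move=> N0 h [->|M0].
- rewrite /G mul0r addr0 ler_pdivlMr; last by rewrite mulr_gt0.
  have : ((2 * E)%N%:R : R) <= M%:R by rewrite ler_nat.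
  rewrite natrM => h2. nra.
- move: h; rewrite M0 leqn0 muln_eq0 /= => /eqP ->.
  by rewrite /G mul0r mul0r lexx.
Qed.

Lemma sum_ind (R : realFieldType) (T : finType) (A : {set T}) (c g b : R) (x : T -> R) :
  (0 < #|A|)%N ->
  (#|A|%:R)^-1 * \sum_(v in A) (c + g * (x v - b)) =
  c + g * ((#|A|%:R)^-1 * \sum_(v in A) x v - b).
Proof.
move=> A0.
have E : \sum_(v in A) (c + g * (x v - b)) = c *+ #|A| + g * (\sum_(v in A) x v - b *+ #|A|).
  rewrite big_split /= sumr_const; congr (_ + _).
  by rewrite -mulr_sumr sumrB sumr_const.
rewrite E -[c *+ _]mulr_natr -[b *+ _]mulr_natr.
have : (#|A|%:R : R) != 0 by rewrite pnatr_eq0 -lt0n.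
move: (#|A|%:R : R) (\sum_(v in A) x v) => n X h.
by field.
Qed.

Lemma main_ind (R : realFieldType) (T : finType) (e : rel T)
  (e_sym : symmetric e) (e_irr : irreflexive e) (n0 : (0 < #|T|)%N) k :
  forall Rm P, Rm = ~: (P :|: nbhdS e P) ->
  qc_exp e R k Rm P <= G (#|T| ^ 2)%:R k%:R (MM e Rm)%:R.
Proof.
set N : R := (#|T| ^ 2)%:R.
have N0 : 0 < N by rewrite /N ltr0n expn_gt0 n0.
elim: k => [|k IH] Rm P HR /=.
  rewrite (_ : P :|: nbhdS e P = ~: Rm); last by rewrite HR setCK.
  by apply: base_le => //; [exact: edges_le | left].
case: ifP => [/eqP R0 | Rne].
  rewrite (_ : P :|: nbhdS e P = ~: Rm); last by rewrite HR setCK.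
  apply: base_le => //; first exact: edges_le.
  by right; rewrite /MM big1 // => x _; rewrite R0 inE.
have s0 : (0 < #|Rm|)%N by rewrite card_gt0 Rne.
set s : R := #|Rm|%:R.
set M : R := (MM e Rm)%:R.
set b : R := M - M ^+ 2 / N.
have M0 : 0 <= M by rewrite ler0n.
have MN : M <= N.
  rewrite /M /N ler_nat; have := MM_lt e_irr Rm; move/(leq_trans _); apply.
  exact: leq_addr.
have b0 : 0 <= b by exact: b_ge0.
have k0 : 0 <= (k%:R : R) by rewrite ler0n.
apply: (@le_trans _ _ ((s)^-1 * \sum_(v in Rm) G N k%:R (MM e (Rv e Rm v))%:R)).
  apply: ler_wpM2l; first by rewrite invr_ge0 ler0n.
  apply: ler_sum => v _; apply: IH; exact: inv_step.
apply: (@le_trans _ _ ((s)^-1 * \sum_(v in Rm) (G N k%:R b + G' N k%:R b * ((MM e (Rv e Rm v))%:R - b)))).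
  apply: ler_wpM2l; first by rewrite invr_ge0 ler0n.
  apply: ler_sum => v _; apply: tangentG => //; exact: ler0n.
rewrite sum_ind //.
apply: (@le_trans _ _ (G N k%:R b)).
  rewrite gerDl; apply: mulr_ge0_le0; first exact: G'_ge0.
  rewrite subr_le0.
  pose D := (\sum_(x : T) (x \in Rm) * deg e Rm x * deg e Rm x)%N.
  apply: (@avg_bound _ _ _ _ D%:R).
  - by rewrite /s ltr0n.
  - exact: N0.
  - by rewrite /s /N -natrX ler_nat leq_exp2r // max_card.
  - have h : (\sum_(v in Rm) MM e (Rv e Rm v) + D <= #|Rm| * MM e Rm)%N.
      rewrite /D -(sum_deg2 e_sym) -big_split /= -sum_nat_const.
      by apply: leq_sum => v _; exact: MM_step.
    rewrite lerBrDr /s /M -natrM -natr_sum -natrD ler_nat; exact: h.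
  - have := @CS R T (fun x => (x \in Rm)%:R) (fun x => (deg e Rm x)%:R) (fun x => ler0n _ _).
    have -> : \sum_x ((x \in Rm)%:R : R) = s.
      by rewrite /s -sum1_card natr_sum [RHS]big_mkcond /=; apply: eq_bigr => x _; case: (x \in Rm).
    have -> : \sum_x ((x \in Rm)%:R * (deg e Rm x)%:R : R) = M.
      by rewrite /M /MM natr_sum; apply: eq_bigr => x _; rewrite natrM.
    have -> : \sum_x ((x \in Rm)%:R * (deg e Rm x)%:R ^+ 2 : R) = D%:R.
      by rewrite /D natr_sum; apply: eq_bigr => x _; rewrite !natrM expr2 mulrA.
    done.
rewrite -addn1 natrD; apply: stepG => //; exact: b_step.
Qed.

Theorem lemma3p3 (R : realFieldType) (T : finType) (e : rel T)
  (e_sym : symmetric e) (e_irr : irreflexive e) (r : nat) :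
  (0 < #|T|)%N -> (1 <= r)%N ->
  qc_exp e R r [set: T] set0 < (#|T| ^ 2)%:R / (2 * r.+1)%:R.
Proof.
move=> n0 r1.
have h := @main_ind R T e e_sym e_irr n0 r _ _ (qc_inv_init e).
apply: (le_lt_trans h).
rewrite natrM -[r.+1]addn1 natrD.
have N0 : 0 < ((#|T| ^ 2)%:R : R) by rewrite ltr0n expn_gt0 n0.
apply: finalG => //; try exact: ler0n.
rewrite ltr_nat; have := MM_lt e_irr [set: T].
move=> h2; apply: leq_trans h2; by rewrite -addn1 leq_add2l.
Qed.
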